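(* The function $h:2^V\to\mathbb{R}$, $h(A)=\sum_{v\in V}h_A(v)$, is non-decreasing and submodular: for all $A\subseteq B\subseteq V$, $h(A)\le h(B)$, and for all $x\in V$, $h(B\cup\{x\})-h(B)\le h(A\cup\{x\})-h(A)$.
   Context: $G=(V,E,w)$ is a finite simple undirected graph with positive edge weights $w$. $N_A(v)=N(v)\cap A$, $W_A(v)=\sum_{u\in N_A(v)}w_{(v,u)}$, $W(v)=W_V(v)$. Define $h_A(v)=W(v)/2$ if $v\in A$ or $W_A(v)\ge W(v)/2$, and $h_A(v)=W_A(v)$ otherwise. *)

(* Defs.v *)
(* A finite simple undirected weighted graph is a vertex
   finType V, a symmetric irreflexive edge relation e, and a weight function
   w : V -> V -> R (only its values on edges matter), symmetric and positive
   on edges. *)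
From HB Require Import structures.
From mathcomp Require Import all_boot all_order all_algebra.
Set Implicit Arguments. Unset Strict Implicit. Unset Printing Implicit Defensive.
Import Order.TTheory GRing.Theory Num.Theory.
Local Open Scope ring_scope.

Section Defs.
Variables (R : realFieldType) (V : finType) (e : rel V) (w : V -> V -> R).

Definition weighted_simple_graph : Prop :=
  [/\ irreflexive e, symmetric e,
      (forall u v, w u v = w v u) & (forall u v, e u v -> 0 < w u v)].

Definition WA (A : {set V}) (v : V) : R := \sum_(u in A | e v u) w v u.

Definition Wt (v : V) : R := WA [set: V] v.

Definition hA (A : {set V}) (v : V) : R :=
  if (v \in A) || (Wt v / 2 <= WA A v) then Wt v / 2 else WA A v.

Definition h (A : {set V}) : R := \sum_(v : V) hA A v.
End Defs.

(* Main.v *)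
Require Import Defs.
From HB Require Import structures.
From mathcomp Require Import all_boot all_order all_algebra.
From mathcomp Require Import lra.
Import Order.TTheory GRing.Theory Num.Theory.
Local Open Scope ring_scope.

Section S.
Variables (R : realFieldType) (V : finType) (e : rel V) (w : V -> V -> R).
Hypothesis G : weighted_simple_graph e w.

Definition ff (c : R) (m : bool) (t : R) := if m || (c <= t) then c else t.

Lemma hAE (A : {set V}) v : hA e w A v = ff (Wt e w v / 2) (v \in A) (WA e w A v).
Proof. by []. Qed.

Lemma ff_mono c (m1 m2 : bool) a b : (m1 -> m2) -> a <= b -> ff c m1 a <= ff c m2 b.
Proof.
rewrite /ff; case: (lerP c a); case: (lerP c b); case: m1; case: m2 => //= ? ? H1 ?;
  try (by have := H1 isT); lra.
Qed.

Lemma ff_sub c (m1 m2 : bool) a b d : (m1 -> m2) -> a <= b -> 0 <= d ->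
  ff c m2 (b + d) - ff c m2 b <= ff c m1 (a + d) - ff c m1 a.
Proof.
rewrite /ff; case: (lerP c a); case: (lerP c b); case: (lerP c (a + d));
  case: (lerP c (b + d)); case: m1; case: m2 => //= ? ? ? ? H1 ? ?;
  try (by have := H1 isT); lra.
Qed.

Lemma WA_mcond (S : {set V}) v : WA e w S v = \sum_u (if (u \in S) && e v u then w v u else 0).
Proof. by rewrite /WA big_mkcond. Qed.

Lemma WA_mono (A B : {set V}) v : A \subset B -> WA e w A v <= WA e w B v.
Proof.
case: G => _ _ _ Hp sAB.
rewrite !WA_mcond; apply: ler_sum => u _.
case uA: (u \in A); case uB: (u \in B) => //=.
- by rewrite (subsetP sAB _ uA) in uB.
- by case: ifP => // /Hp /ltW.
Qed.

Lemma WA_add (S : {set V}) x v : x \notin S ->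
  WA e w (x |: S) v = WA e w S v + (if e v x then w v x else 0).
Proof.
move=> xS; rewrite !WA_mcond.
rewrite [in RHS](bigD1 x) //= [in LHS](bigD1 x) //= setU11 (negbTE xS) /=.
rewrite add0r addrC; congr (_ + _); apply: eq_bigr => u ux.
by rewrite in_setU1 (negbTE ux).
Qed.

Lemma incr_ge0 v x : 0 <= (if e v x then w v x else 0).
Proof. case: G => _ _ _ Hp; by case: ifP => // /Hp /ltW. Qed.

Lemma hmono (A B : {set V}) : A \subset B -> h e w A <= h e w B.
Proof.
move=> sAB; apply: ler_sum => v _; rewrite !hAE; apply: ff_mono.
- by move/(subsetP sAB).
- exact: WA_mono.
Qed.
End S.

Theorem mainTheorem12 (R : realFieldType) (V : finType) (e : rel V)
    (w : V -> V -> R) :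
  weighted_simple_graph e w ->
  (forall A B : {set V}, A \subset B -> h e w A <= h e w B) /\
  (forall (A B : {set V}) (x : V), A \subset B ->
     h e w (x |: B) - h e w B <= h e w (x |: A) - h e w A).
Proof.
move=> G; split; first by move=> A B; exact: hmono.
move=> A B x sAB.
case xB: (x \in B).
  have -> : x |: B = B by apply/setUidPr; rewrite sub1set.
  rewrite subrr subr_ge0; apply: hmono => //; exact: subsetUr.
have xA : x \notin A by apply/negP => /(subsetP sAB); rewrite xB.
have xB' : x \notin B by rewrite xB.
rewrite /h -!sumrB; apply: ler_sum => v _; rewrite !hAE.
rewrite (@WA_add _ _ e w _ _ v xA) (@WA_add _ _ e w _ _ v xB') !in_setU1.
have Hab := @WA_mono _ _ e w G _ _ v sAB.
have Hd := @incr_ge0 _ _ e w G v x.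
move: Hab Hd; case: eqP => [->|_] /= Hab Hd.
  rewrite (negbTE xA) (negbTE xB').
  suff: @ff R (Wt e w x / 2) false (WA e w A x) <= @ff R (Wt e w x / 2) false (WA e w B x).
    by rewrite /ff /=; lra.
  by apply: ff_mono.
apply: ff_sub => //; exact: (subsetP sAB).
Qed.
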